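(* Consider a multi-sender single-uniprior index-coding instance with binary messages, information-flow graph $\mathcal{G}$ and message graph $\mathcal{U}$, and let $\mathcal{V}_S$ be the vertex set of a degenerated leaf SCC of $\mathcal{G}$, with witnessing sets $\mathcal{V}_{\mathrm{inside}}$ and $\mathcal{V}_{\mathrm{outside}}$. Form $(\mathcal{G}',\mathcal{U}')$ by appending this leaf SCC: pick any $v_{\mathrm{inside}}\in\mathcal{V}_{\mathrm{inside}}$; if $\mathcal{V}_{\mathrm{outside}}$ contains exactly one non-leaf vertex, add an arc from $v_{\mathrm{inside}}$ to that vertex; otherwise (all vertices of $\mathcal{V}_{\mathrm{outside}}$ are leaves) add an arc from $v_{\mathrm{inside}}$ to an arbitrarily chosen vertex of $\mathcal{V}_{\mathrm{outside}}$. The message graph and senders are unchanged ($\mathcal{U}'=\mathcal{U}$). Then \[ N_{\mathrm{SCC}}(\mathcal{G}')\in\{N_{\mathrm{SCC}}(\mathcal{G}),\,N_{\mathrm{SCC}}(\mathcal{G})-1\},\qquad \tilde{\ell}^*(\mathcal{G}',\mathcal{U}')=\tilde{\ell}^*(\mathcal{G},\mathcal{U}),\qquad V_{\mathrm{out}}(\mathcal{G}')=V_{\mathrm{out}}(\mathcal{G}), \] where $N_{\mathrm{SCC}}(\cdot)$ denotes the number of leaf SCCs.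
   Context: Multi-sender single-uniprior index coding with binary messages: there are $n$ receivers and $n$ independent messages $x_1,\dots,x_n$, each a single bit uniformly distributed on $\{0,1\}$. Receiver $i$ knows $x_i$ a priori and requests a set of messages not containing $x_i$. The information-flow graph is the directed graph $\mathcal{G}=(\mathcal{V},\mathcal{A})$ with an arc $(j\to i)$ iff receiver $i$ requests $x_j$. There are $S$ senders; sender $s$ knows a subset $\mathcal{M}_s$ of the messages, and every message is known to some sender. An index code consists of, for each sender $s$, an encoding function mapping the messages in $\mathcal{M}_s$ to $\ell_s$ bits, and for each receiver $i$ a decoding function that, from all senders' outputs together with $x_i$, returns every message requested by $i$, for all message values; its length is $\sum_s \ell_s$. $\tilde{\ell}^*(\mathcal{G},\mathcal{U})$ is the minimum length of an index code for the instance. The message graph $\mathcal{U}$ is the undirected graph on $\mathcal{V}$ with an edge $\{i,j\}$ iff some sender knows both $x_i$ and $x_j$. A leaf vertex of $\mathcal{G}$ has no outgoing arcs; $V_{\mathrm{out}}(\mathcal{G})$ is the number of non-leaf vertices; $j$ is a predecessor of $i$ iff there is a directed path in $\mathcal{G}$ from $j$ to $i$. A leaf SCC is a strongly connected component of $\mathcal{G}$ with at least two vertices and no arc from it to a vertex outside it. For a vertex set $\mathcal{S}$, a vertex $i\notin\mathcal{S}$ is a neighbor of $\mathcal{S}$ iff $\mathcal{U}$ has an edge between $i$ and some vertex of $\mathcal{S}$. A leaf SCC with vertex set $\mathcal{V}_S$ is message-connected iff the subgraph of $\mathcal{U}$ induced by $\mathcal{V}_S$ is connected; message-disconnected iff two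 vertices of $\mathcal{V}_S$ are joined by no path in $\mathcal{U}$; semi-message-connected otherwise. A semi-message-connected leaf SCC is degenerated iff there exist $\mathcal{V}_{\mathrm{inside}}\subsetneq\mathcal{V}_S$ and $\mathcal{V}_{\mathrm{outside}}\subseteq\mathcal{V}\setminus\mathcal{V}_S$ such that: $\mathcal{U}$ has no edge between $\mathcal{V}_{\mathrm{inside}}$ and $\mathcal{V}_S\setminus\mathcal{V}_{\mathrm{inside}}$; $\mathcal{V}_{\mathrm{outside}}$ contains at most one non-leaf vertex of $\mathcal{G}$; and every neighbor of $\mathcal{V}_{\mathrm{inside}}$ is either in $\mathcal{V}_{\mathrm{outside}}$ or a predecessor in $\mathcal{G}$ of some vertex of $\mathcal{V}_{\mathrm{outside}}$. These $\mathcal{V}_{\mathrm{inside}},\mathcal{V}_{\mathrm{outside}}$ are called witnessing sets. *)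

(* Defs.v *)
From mathcomp Require Import all_boot.
From mathcomp Require Import boolp.

Set Implicit Arguments.
Unset Strict Implicit.
Unset Printing Implicit Defensive.

Section IndexCoding.
Variables (n S : nat).

(* Information-flow graph: G u v means an arc u -> v, i.e. receiver v requests x_u.
   Senders: M s is the set of messages known to sender s. *)

Definition single_uniprior (G : rel 'I_n) : Prop := forall i, ~~ G i i.

Definition covers (M : 'I_S -> {set 'I_n}) : Prop :=
  forall j : 'I_n, exists s, j \in M s.

(* An index code: sender s maps its messages to len s bits (enc s depends only
   on the messages in M s); receiver i decodes each requested x_j from all
   senders' outputs together with x_i. *)
Definition is_index_code (G : rel 'I_n) (M : 'I_S -> {set 'I_n})
    (len : 'I_S -> nat)
    (enc : 'I_S -> {ffun 'I_n -> bool} -> seq bool)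
    (dec : 'I_n -> 'I_n -> ('I_S -> seq bool) -> bool -> bool) : Prop :=
  [/\ forall s x, size (enc s x) = len s,
      forall s (x y : {ffun 'I_n -> bool}),
        (forall j, j \in M s -> x j = y j) -> enc s x = enc s y
    & forall i j, G j i -> forall x : {ffun 'I_n -> bool},
        dec i j (fun s => enc s x) (x i) = x j].

Definition achievable (G : rel 'I_n) (M : 'I_S -> {set 'I_n}) (L : nat) : Prop :=
  exists len enc dec, is_index_code G M len enc dec /\ \sum_(s < S) len s = L.

(* Minimum length of an index code (0 by convention if no code exists,
   which never happens when every message is known to some sender). *)
Definition ell_star (G : rel 'I_n) (M : 'I_S -> {set 'I_n}) : nat :=
  match pselect (exists L, achievable G M L) with
  | left h =>
      @ex_minn (fun L => `[< achievable G M L >])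
        (let: ex_intro L hL := h in ex_intro _ L (asboolT hL))
  | right _ => 0
  end.

Definition leaf (G : rel 'I_n) (i : 'I_n) : bool := ~~ [exists j, G i j].

Definition V_out (G : rel 'I_n) : nat := #|[set i | ~~ leaf G i]|.

Definition is_SCC (G : rel 'I_n) (C : {set 'I_n}) : bool :=
  [exists v, C == [set u | connect G v u && connect G u v]].

Definition leaf_SCC (G : rel 'I_n) (C : {set 'I_n}) : bool :=
  [&& is_SCC G C, 1 < #|C| &
      [forall u, forall v, ((u \in C) && G u v) ==> (v \in C)]].

Definition N_SCC (G : rel 'I_n) : nat := #|[set C : {set 'I_n} | leaf_SCC G C]|.

Definition msg_edge (M : 'I_S -> {set 'I_n}) : rel 'I_n :=
  fun i j => (i != j) && [exists s, (i \in M s) && (j \in M s)].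

Definition msg_edge_in (M : 'I_S -> {set 'I_n}) (C : {set 'I_n}) : rel 'I_n :=
  fun i j => [&& msg_edge M i j, i \in C & j \in C].

Definition message_connected (M : 'I_S -> {set 'I_n}) (C : {set 'I_n}) : Prop :=
  forall i j, i \in C -> j \in C -> connect (msg_edge_in M C) i j.

Definition message_disconnected (M : 'I_S -> {set 'I_n}) (C : {set 'I_n}) : Prop :=
  exists i j, [/\ i \in C, j \in C & ~~ connect (msg_edge M) i j].

Definition semi_message_connected (M : 'I_S -> {set 'I_n}) (C : {set 'I_n}) : Prop :=
  ~ message_connected M C /\ ~ message_disconnected M C.

Definition neighbor (M : 'I_S -> {set 'I_n}) (A : {set 'I_n}) (i : 'I_n) : bool :=
  (i \notin A) && [exists a in A, msg_edge M i a].

(* j is a predecessor of i: a directed path from j to i (the reflexive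
   convention does not change the witnessing condition below). *)
Definition predecessor (G : rel 'I_n) (j i : 'I_n) : bool := connect G j i.

Definition witnessing_sets (G : rel 'I_n) (M : 'I_S -> {set 'I_n})
    (VS Vin Vout : {set 'I_n}) : Prop :=
  [/\ Vin \proper VS,
      Vout \subset ~: VS,
      forall a b, a \in Vin -> b \in VS :\: Vin -> ~~ msg_edge M a b,
      #|[set u in Vout | ~~ leaf G u]| <= 1
    & forall i, neighbor M Vin i ->
        (i \in Vout) || [exists o in Vout, predecessor G i o]].

Definition degenerated (G : rel 'I_n) (M : 'I_S -> {set 'I_n}) (VS : {set 'I_n}) : Prop :=
  semi_message_connected M VS /\ exists Vin Vout, witnessing_sets G M VS Vin Vout.

Definition add_arc (G : rel 'I_n) (a b : 'I_n) : rel 'I_n :=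
  fun u v => G u v || ((u == a) && (v == b)).

End IndexCoding.

(* Main.v *)
Require Import Defs.
From mathcomp Require Import all_boot.
From mathcomp Require Import zify.

Set Implicit Arguments.
Unset Strict Implicit.
Unset Printing Implicit Defensive.

Lemma connect_fwd (T : finType) (R : rel T) (P : T -> Prop) :
  (forall x y, P x -> R x y -> P y) -> forall x y, P x -> connect R x y -> P y.
Proof.
move=> H x y Px /connectP [p pth ->].
elim: p x Px pth => //= a p IH x Px /andP [Rxa pth].
exact: IH (H _ _ Px Rxa) pth.
Qed.

Lemma scc_cls n (R : rel 'I_n) C x : is_SCC R C -> x \in C ->
  C = [set u | connect R x u && connect R u x].
Proof.
move=> /existsP [v /eqP ->]; rewrite inE => /andP [vx xv].
apply/setP => u; rewrite !inE; apply/idP/idP => /andP [a b]; apply/andP; split.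
- exact: connect_trans xv a.
- exact: connect_trans b vx.
- exact: connect_trans vx a.
- exact: connect_trans b xv.
Qed.

Lemma leaf_closed n (R : rel 'I_n) C x y :
  leaf_SCC R C -> x \in C -> connect R x y -> y \in C.
Proof.
case/and3P => _ _ /forallP H; apply: (@connect_fwd _ R (fun t => t \in C)) => u v uC Ruv.
by move/forallP: (H u) => /(_ v) /implyP; apply; apply/andP.
Qed.

Section NSCC.
Variables (n : nat) (G : rel 'I_n) (vin w : 'I_n).
Let G' := add_arc G vin w.

Lemma cG'E u v : connect G' u v ->
  connect G u v || (connect G u vin && connect G w v).
Proof.
apply: (@connect_fwd _ G' (fun t => connect G u t || (connect G u vin && connect G w t))); last by rewrite connect0.
move=> x y /orP [cux | /andP [cuv cwx]] /orP [Gxy | /andP [/eqP xv /eqP yw]].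
- by rewrite (connect_trans cux (connect1 Gxy)).
- by subst; rewrite cux connect0 orbT.
- by rewrite cuv (connect_trans cwx (connect1 Gxy)) orbT.
- by subst; rewrite cuv connect0 orbT.
Qed.

Lemma subG u v : connect G u v -> connect G' u v.
Proof.
apply: (@connect_fwd _ G (fun t => connect G' u t)); last by rewrite connect0.
move=> x y cx Gxy; apply: connect_trans cx (connect1 _).
by rewrite /G' /add_arc Gxy.
Qed.

Lemma transfer (C : {set 'I_n}) : vin \notin C -> leaf_SCC G' C = leaf_SCC G C.
Proof.
move=> nC; apply/idP/idP => lC; case/and3P: (lC) => /existsP [v /eqP eC] card clo.
- have nr : forall t, t \in C -> ~~ connect G t vin.
    move=> t tC; apply/negP => ct; move: nC.
    by rewrite (leaf_closed lC tC (subG ct)).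
  have vC : v \in C by rewrite eC inE connect0.
  apply/and3P; split => //.
  + apply/existsP; exists v; apply/eqP/setP => u; rewrite {1}eC !inE.
    apply/idP/idP => /andP [h1 h2].
    * have uC : u \in C by rewrite eC inE h1 h2.
      move: (cG'E h1) (cG'E h2).
      by rewrite (negbTE (nr _ vC)) (negbTE (nr _ uC)) !andFb !orbF => -> ->.
    * by rewrite !subG.
  + apply/forallP => u; apply/forallP => y; apply/implyP => /andP [uC Guy].
    move/forallP: clo => /(_ u) /forallP /(_ y) /implyP; apply.
    by rewrite uC /G' /add_arc Guy.
- have nr : forall t, t \in C -> ~~ connect G t vin.
    move=> t tC; apply/negP => ct; move: nC.
    by rewrite (leaf_closed lC tC ct).
  have vC : v \in C by rewrite eC inE connect0.
  apply/and3P; split => //.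
  + apply/existsP; exists v; apply/eqP/setP => u; rewrite {1}eC !inE.
    apply/idP/idP => /andP [h1 h2].
    * by rewrite !subG.
    * move: (cG'E h1); rewrite (negbTE (nr _ vC)) andFb orbF => h1'.
      have uC : u \in C by apply: leaf_closed lC vC h1'.
      move: (cG'E h2); rewrite (negbTE (nr _ uC)) andFb orbF => h2'.
      by rewrite h1' h2'.
  + apply/forallP => u; apply/forallP => y; apply/implyP => /andP [uC].
    rewrite /G' /add_arc => /orP [Guy | /andP [/eqP uv _]].
    * move/forallP: clo => /(_ u) /forallP /(_ y) /implyP; apply.
      by rewrite uC Guy.
    * by subst; rewrite uC in nC.
Qed.

Lemma count (VS : {set 'I_n}) : leaf_SCC G VS -> vin \in VS -> w \notin VS ->
  N_SCC G' = N_SCC G \/ N_SCC G' = N_SCC G - 1.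
Proof.
move=> lVS vinVS wNVS.
have notleaf : ~~ leaf_SCC G' VS.
  apply/negP => /and3P [_ _ /forallP /(_ vin) /forallP /(_ w) /implyP].
  rewrite vinVS /G' /add_arc !eqxx orbT /= => /(_ isT).
  by rewrite (negbTE wNVS).
have eqVS : forall C, leaf_SCC G C -> vin \in C -> C = VS.
  move=> C lC vC; case/and3P: (lC) => sC _ _; case/and3P: (lVS) => sV _ _.
  by rewrite (scc_cls sC vC) (scc_cls sV vinVS).
set A := [set C | leaf_SCC G C]; set B := [set C | leaf_SCC G' C].
set K := [set C in B | vin \in C].
have eB : B = (A :\ VS) :|: K.
  apply/setP => C; rewrite !inE; case vC: (vin \in C).
  - rewrite andbT; case lG: (leaf_SCC G C); last by rewrite andbF.
    by have := eqVS _ lG vC => ->; rewrite eqxx.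
  - rewrite andbF orbF (transfer (negbT vC)).
    have -> // : (C != VS) by apply/eqP => e; rewrite e vinVS in vC.
have I0 : (A :\ VS) :&: K = set0.
  apply/setP => C; rewrite !inE; apply/negP => /andP [/andP [nV lG] /andP [_ vC]].
  by rewrite (eqVS _ lG vC) eqxx in nV.
have K1 : #|K| <= 1.
  apply/card_le1_eqP => C1 C2; rewrite !inE => /andP [l1 v1] /andP [l2 v2].
  case/and3P: l1 => s1 _ _; case/and3P: l2 => s2 _ _.
  by rewrite (scc_cls s1 v1) (scc_cls s2 v2).
have cA : #|A| = 1 + #|A :\ VS| by rewrite (cardsD1 VS A) inE lVS.
have cB : #|B| = #|A :\ VS| + #|K| by rewrite eB cardsU I0 cards0 subn0.
rewrite /N_SCC -/A -/B cB cA.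
move: K1; case: #|K| => [|[|]] //= _; [right|left]; lia.
Qed.

End NSCC.

Section Ell.
Variables (n S : nat) (G : rel 'I_n) (M : 'I_S -> {set 'I_n}).
Variables (len : 'I_S -> nat) (enc : 'I_S -> {ffun 'I_n -> bool} -> seq bool)
  (dec : 'I_n -> 'I_n -> ('I_S -> seq bool) -> bool -> bool).
Hypothesis code : is_index_code G M len enc dec.

Definition zf (x : {ffun 'I_n -> bool}) : {ffun 'I_n -> bool} :=
  [ffun i => if leaf G i then false else x i].

Definition Kn (i j : 'I_n) := forall x y, (forall s, enc s (zf x) = enc s (zf y)) ->
  zf x i = zf y i -> zf x j = zf y j.

Lemma K_arc i j : G j i -> Kn i j.
Proof.
move=> Gji x y He Hi; case: code => _ _ hd.
rewrite -(hd i j Gji (zf x)) -(hd i j Gji (zf y)) Hi.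
have -> : (fun s => enc s (zf x)) = (fun s => enc s (zf y)) by apply: boolp.funext.
by [].
Qed.

Lemma K_connect i j : connect G j i -> Kn i j.
Proof.
move=> c; refine (@connect_fwd _ G (fun t => Kn t j) _ j i _ c); last by [].
move=> x y Kx Gxy a d He Hy; exact: Kx He (K_arc Gxy He Hy).
Qed.

Lemma nonleaf_arc j i : G j i -> ~~ leaf G j.
Proof. by move=> Gji; rewrite /leaf negbK; apply/existsP; exists i. Qed.

Variables (VS Vin Vout : {set 'I_n}) (vin w b : 'I_n).
Hypothesis noedge : forall a b, a \in Vin -> b \in VS :\: Vin -> ~~ msg_edge M a b.
Hypothesis cardVout : #|[set u in Vout | ~~ leaf G u]| <= 1.
Hypothesis nbr : forall i, neighbor M Vin i ->
        (i \in Vout) || [exists o in Vout, predecessor G i o].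
Hypothesis vinIn : vin \in Vin.
Hypothesis wOut : w \in Vout.
Hypothesis hw : [exists u in Vout, ~~ leaf G u] -> ~~ leaf G w.
Hypothesis cvb : connect G vin b.
Hypothesis bNin : b \notin Vin.
Hypothesis nlvin : ~~ leaf G vin.

Lemma determ x y : (forall s, enc s (zf x) = enc s (zf y)) ->
  zf x w = zf y w -> zf x vin = zf y vin.
Proof.
move=> He Hw.
have key : forall o j, o \in Vout -> connect G j o -> zf x j = zf y j.
  move=> o j oO cjo; case lo: (leaf G o).
  - by apply: (K_connect cjo He); rewrite !ffunE lo.
  - have lw : ~~ leaf G w by apply: hw; apply/existsP; exists o; rewrite oO lo.
    have oe : o = w.
      move/card_le1_eqP: cardVout => H1; apply: H1; by rewrite !inE ?oO ?lo ?wOut ?lw.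
    by subst; apply: (K_connect cjo He Hw).
have nb : forall j, neighbor M Vin j -> zf x j = zf y j.
  move=> j /nbr /orP [jO | /existsP [o /andP [oO cjo]]].
  - exact: key jO (connect0 _ _).
  - exact: key oO cjo.
pose h := [ffun i => if i \in Vin then zf x i else zf y i].
have zh : zf h = h.
  apply/ffunP => i; rewrite !ffunE.
  by case: (leaf G i); case: (i \in Vin).
have Eh : forall s, enc s (zf h) = enc s (zf y).
  move=> s; rewrite zh; case: code => _ dep _.
  case: (boolP [exists a in Vin, a \in M s]) => [/existsP [a /andP [aV aM]] | nA].
  - transitivity (enc s (zf x)); last exact: He.
    apply: dep => j jM; rewrite ffunE; case: ifP => // jV.
    symmetry; apply: nb; rewrite /neighbor jV /=; apply/existsP; exists a.
    rewrite aV /msg_edge /=; apply/andP; split.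
    + by apply/eqP => e; rewrite e aV in jV.
    + by apply/existsP; exists s; rewrite jM aM.
  - apply: dep => j jM; rewrite ffunE; case: ifP => // jV.
    by move/negP: nA; case; apply/existsP; exists j; rewrite jV jM.
have := K_connect cvb Eh.
rewrite zh !ffunE (negbTE bNin) vinIn => H; apply: H.
by [].
Qed.

Definition enc' (s : 'I_S) (x : {ffun 'I_n -> bool}) := enc s (zf x).
Definition dec' (i j : 'I_n) (cw : 'I_S -> seq bool) (bb : bool) : bool :=
  if [pick y : {ffun 'I_n -> bool} | [forall s, enc s (zf y) == cw s] && (y i == bb)]
  is Some y then y j else false.

Lemma new_code : is_index_code (add_arc G vin w) M len enc' dec'.
Proof.
case: code => sz dep dc; split.
- by move=> s x; rewrite /enc' sz.
- move=> s x y H; apply: dep => j jM; by rewrite !ffunE H.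
- move=> i j Gji x; rewrite /dec'; case: pickP => [y /andP [/forallP He /eqP Hi] | none].
  + have He' : forall s, enc s (zf y) = enc s (zf x) by move=> s; apply/eqP.
    have Hi' : zf y i = zf x i by rewrite !ffunE Hi.
    move: Gji; rewrite /add_arc => /orP [Gji | /andP [/eqP jv /eqP iw]].
    * have := K_arc Gji He' Hi'; rewrite !ffunE (negbTE (nonleaf_arc Gji)); exact.
    * subst; have := determ He' Hi'; rewrite !ffunE (negbTE nlvin); exact.
  + move: (none x); rewrite eqxx andbT => /negP; case.
    by apply/forallP => s.
Qed.

End Ell.

Lemma ell_star_ext n S (G1 G2 : rel 'I_n) (M : 'I_S -> {set 'I_n}) :
  (forall L, achievable G1 M L <-> achievable G2 M L) -> ell_star G1 M = ell_star G2 M.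
Proof.
move=> H; rewrite /ell_star.
case: boolp.pselect => [h1|n1]; case: boolp.pselect => [h2|n2] //.
- apply: eq_ex_minn => L.
  by apply/boolp.asboolP/boolp.asboolP => /H.
- by exfalso; case: n2; case: h1 => L /H hL; exists L.
- by exfalso; case: n1; case: h2 => L /H hL; exists L.
Qed.

Theorem proposition2 (n S : nat) (G : rel 'I_n) (M : 'I_S -> {set 'I_n})
    (VS Vin Vout : {set 'I_n}) (vin w : 'I_n) :
  single_uniprior G ->
  covers M ->
  leaf_SCC G VS ->
  degenerated G M VS ->
  witnessing_sets G M VS Vin Vout ->
  vin \in Vin ->
  w \in Vout ->
  ([exists u in Vout, ~~ leaf G u] -> ~~ leaf G w) ->
  [/\ N_SCC (add_arc G vin w) = N_SCC G \/ N_SCC (add_arc G vin w) = N_SCC G - 1,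
      ell_star (add_arc G vin w) M = ell_star G M
    & V_out (add_arc G vin w) = V_out G].
Proof.
move=> _ _ lVS _ [pVS sVout noedge cardVout nbr] vinIn wOut hw.
have vinVS : vin \in VS := subsetP (proper_sub pVS) _ vinIn.
have [_ [b bVS bNin]] := properP pVS.
have wNVS : w \notin VS by move/subsetP: sVout => /(_ w wOut); rewrite inE.
have sccVS : is_SCC G VS by case/and3P: lVS.
have cvb : connect G vin b.
  by move: bVS; rewrite (scc_cls sccVS vinVS) inE => /andP [].
have bnevin : b != vin by apply/eqP => e; rewrite e vinIn in bNin.
have nlvin : ~~ leaf G vin.
  case/connectP: cvb => [[|c p]] /=.
  - by move=> _ e; rewrite e eqxx in bnevin.
  - by move=> /andP [Gvc _] _; rewrite /leaf negbK; apply/existsP; exists c.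
have leafeq : forall i, leaf (add_arc G vin w) i = leaf G i.
  move=> i; rewrite /leaf; congr (~~ _).
  apply/existsP/existsP => [[j /orP [Gij | /andP [/eqP -> _]]] | [j Gij]].
  - by exists j.
  - by move: nlvin; rewrite /leaf negbK => /existsP.
  - by exists j; rewrite /add_arc Gij.
split.
- exact: count lVS vinVS wNVS.
- apply: ell_star_ext => L; split.
  + move=> [len [enc [dec [[sz dep dc] sum]]]]; exists len, enc, dec; split=> //.
    split=> // i j Gji x; apply: dc; by rewrite /add_arc Gji.
  + move=> [len [enc [dec [code sum]]]].
    exists len, (enc' G enc), (dec' G enc); split=> //.
    exact: (new_code code cardVout nbr vinIn wOut hw cvb bNin nlvin).
- by rewrite /V_out; apply: eq_card => i; rewrite !inE leafeq.
Qed.
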